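(* Let $G=(V,E)$ be a grid graph, and let $P_G=\{(x-y,\,x+y): (x,y)\in V\}\subset\mathbb{R}^2$. Then the vertex set of $G$ can be partitioned into vertex-disjoint paths on three vertices if and only if there exists a set of $\frac{2|V|}{3}$ axis-parallel unit squares discriminating $P_G$ (in particular $|V|$ is divisible by $3$).
   Context: A grid graph is a graph whose vertex set is a finite subset of $\mathbb{Z}^2$, two vertices being adjacent iff they are at Euclidean distance $1$. An axis-parallel unit square is a closed square $[x,x+1]\times[y,y+1]\subset\mathbb{R}^2$. A set $S'$ of objects discriminates $P$ if for every $p\in P$ the set $S'_p=\{s\in S': p\in s\}$ is nonempty, and $S'_p\neq S'_q$ for all distinct $p,q\in P$. *)

(* Defs.v *)
From Stdlib Require Import Reals ZArith List Permutation.
Import ListNotations.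
Open Scope R_scope.

(** A grid graph is given by its finite vertex set V ⊂ Z^2, represented as a
    duplicate-free list.  Two vertices are adjacent iff at Euclidean distance 1,
    i.e. |x1-x2| + |y1-y2| = 1 for integer points. *)
Definition grid_adj (u v : Z * Z) : Prop :=
  (Z.abs (fst u - fst v) + Z.abs (snd u - snd v) = 1)%Z.

Definition is_P3 (V : list (Z * Z)) (t : (Z * Z) * (Z * Z) * (Z * Z)) : Prop :=
  let '(a, b, c) := t in
  In a V /\ In b V /\ In c V /\
  a <> b /\ b <> c /\ a <> c /\ grid_adj a b /\ grid_adj b c.

(** The vertex set of G is partitioned into vertex-disjoint paths on three
    vertices: a family of P3's whose vertex lists, concatenated, form a
    permutation of V (so they are disjoint and cover V). *)
Definition P3_partition (V : list (Z * Z)) : Prop :=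
  exists T : list ((Z * Z) * (Z * Z) * (Z * Z)),
    Forall (is_P3 V) T /\
    Permutation (flat_map (fun t => let '(a, b, c) := t in [a; b; c]) T) V.

(** Axis-parallel closed unit square [x,x+1]×[y,y+1], represented by its
    lower-left corner (x, y). *)
Definition in_square (s : R * R) (p : R * R) : Prop :=
  fst s <= fst p <= fst s + 1 /\ snd s <= snd p <= snd s + 1.

Definition discriminates (S : list (R * R)) (P : list (R * R)) : Prop :=
  (forall p, In p P -> exists s, In s S /\ in_square s p) /\
  (forall p q, In p P -> In q P -> p <> q ->
     exists s, In s S /\ ~ (in_square s p <-> in_square s q)).

Definition rotate_pt (v : Z * Z) : R * R :=
  (IZR (fst v - snd v), IZR (fst v + snd v)).

Definition P_of (V : list (Z * Z)) : list (R * R) := map rotate_pt V.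

(* Main.v *)
Require Import Defs.
From Stdlib Require Import Reals ZArith List Permutation Lia Lra Bool.
Import ListNotations.

Open Scope nat_scope.

Fixpoint sumf {A} (f : A -> nat) (l : list A) : nat :=
  match l with [] => 0 | x :: t => f x + sumf f t end.

Lemma sumf_le {A} (f g : A -> nat) l : (forall x, In x l -> f x <= g x) -> sumf f l <= sumf g l.
Proof. induction l; simpl; intros H; auto. specialize (IHl (fun x Hx => H x (or_intror Hx))). specialize (H a (or_introl eq_refl)). lia. Qed.

Lemma sumf_le_eq {A} (f g : A -> nat) l : (forall x, In x l -> f x <= g x) ->
  sumf f l = sumf g l -> forall x, In x l -> f x = g x.
Proof.
  induction l as [|a l IH]; simpl; intros H E x Hx; [contradiction|].
  assert (H1 := sumf_le f g l (fun x Hx => H x (or_intror Hx))).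
  assert (H2 := H a (or_introl eq_refl)).
  destruct Hx as [<-|Hx]; [lia|]. apply IH; auto; lia.
Qed.

Lemma sumf_const {A} c (l : list A) : sumf (fun _ => c) l = c * length l.
Proof. induction l; simpl; lia. Qed.

Lemma sumf_ext {A} (f g : A -> nat) l : (forall x, f x = g x) -> sumf f l = sumf g l.
Proof. intros H; induction l; simpl; auto. Qed.

Lemma sumf_plus {A} (f g : A -> nat) l : sumf (fun x => f x + g x) l = sumf f l + sumf g l.
Proof. induction l; simpl; lia. Qed.

Lemma sumf_ind {A} (p : A -> bool) l : sumf (fun x => if p x then 1 else 0) l = length (filter p l).
Proof. induction l; simpl; auto. destruct (p a); simpl; lia. Qed.

Lemma double_count {A B} (f : A -> B -> bool) la lb :
  sumf (fun a => length (filter (f a) lb)) la = sumf (fun b => length (filter (fun a => f a b) la)) lb.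
Proof.
  induction la as [|a la IH]; simpl.
  - induction lb; simpl; auto.
  - rewrite (sumf_ext (fun b => length (if f a b then a :: filter (fun a0 => f a0 b) la else filter (fun a0 => f a0 b) la)) (fun b => (if f a b then 1 else 0) + length (filter (fun a => f a b) la))).
    + rewrite sumf_plus, sumf_ind, IH. auto.
    + intros b. simpl. destruct (f a b); simpl; auto.
Qed.

Lemma sumf_12 {A} (p : A -> bool) l : sumf (fun x => if p x then 1 else 2) l + length (filter p l) = 2 * length l.
Proof. induction l; simpl; auto. destruct (p a); simpl; lia. Qed.

Lemma filter_compl {A} (p : A -> bool) l : length (filter p l) + length (filter (fun x => negb (p x)) l) = length l.
Proof. induction l; simpl; auto. destruct (p a); simpl; lia. Qed.

Lemma three_of {A} (l : list A) : NoDup l -> 3 <= length l ->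
  exists a b c, In a l /\ In b l /\ In c l /\ a <> b /\ b <> c /\ a <> c.
Proof.
  intros H Hl. destruct l as [|a [|b [|c l]]]; simpl in Hl; try lia.
  inversion H as [|? ? Ha Hn1]; inversion Hn1 as [|? ? Hb Hn2].
  exists a, b, c; simpl; repeat split; auto; intros E; subst; simpl in *; tauto.
Qed.

Lemma two_of {A} (l : list A) q : NoDup l -> length l = 2 -> In q l -> exists x, In x l /\ x <> q.
Proof.
  intros H Hl Hq. destruct l as [|a [|b [|c l]]]; simpl in Hl; try lia.
  inversion H as [|? ? Ha H1]. simpl in *.
  destruct Hq as [<-|[<-|[]]].
  - exists b; split; [simpl; auto|]; intros E; subst; simpl in *; tauto.
  - exists a; split; [simpl; auto|]; intros E; subst; simpl in *; tauto.
Qed.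

Lemma one_eq {A} (l : list A) x y : length l = 1 -> In x l -> In y l -> x = y.
Proof. intros Hl. destruct l as [|a [|b l]]; simpl in *; try lia. intros [<-|[]] [<-|[]]; auto. Qed.

Lemma len_pos {A} (l : list A) x : In x l -> 1 <= length l.
Proof. destruct l; simpl; [tauto | lia]. Qed.

Open Scope R_scope.

Lemma sq_bounds (s : R * R) (u v : Z * Z) :
  in_square s (rotate_pt u) -> in_square s (rotate_pt v) ->
  (Z.abs ((fst u - snd u) - (fst v - snd v)) <= 1 /\
   Z.abs ((fst u + snd u) - (fst v + snd v)) <= 1)%Z.
Proof.
  destruct s as [x y]; unfold in_square, rotate_pt; simpl.
  intros [[H1 H2] [H3 H4]] [[H5 H6] [H7 H8]].
  set (a := (fst u - snd u)%Z) in *. set (b := (fst u + snd u)%Z) in *.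
  set (c := (fst v - snd v)%Z) in *. set (d := (fst v + snd v)%Z) in *.
  assert (E1 : (a - c <= 1)%Z) by (apply le_IZR; rewrite minus_IZR; lra).
  assert (E2 : (-1 <= a - c)%Z) by (apply le_IZR; rewrite minus_IZR; lra).
  assert (E3 : (b - d <= 1)%Z) by (apply le_IZR; rewrite minus_IZR; lra).
  assert (E4 : (-1 <= b - d)%Z) by (apply le_IZR; rewrite minus_IZR; lra).
  split; lia.
Qed.

Lemma sq_adj (s : R * R) (u v : Z * Z) :
  in_square s (rotate_pt u) -> in_square s (rotate_pt v) -> u <> v -> grid_adj u v.
Proof.
  intros H1 H2 Hne. destruct (sq_bounds s u v H1 H2) as [A B].
  destruct u as [u1 u2], v as [v1 v2]; unfold grid_adj; simpl in *.
  assert (~ (u1 = v1 /\ u2 = v2)) by (intros [-> ->]; auto).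
  lia.
Qed.

Lemma sq_three (s : R * R) (u v w : Z * Z) :
  in_square s (rotate_pt u) -> in_square s (rotate_pt v) -> in_square s (rotate_pt w) ->
  u <> v -> v <> w -> u <> w -> False.
Proof.
  intros H1 H2 H3 N1 N2 N3.
  destruct (sq_bounds s u v H1 H2) as [A B].
  destruct (sq_bounds s v w H2 H3) as [C D].
  destruct (sq_bounds s u w H1 H3) as [E F].
  destruct u as [u1 u2], v as [v1 v2], w as [w1 w2]; simpl in *.
  assert (~ (u1 = v1 /\ u2 = v2)) by (intros [-> ->]; auto).
  assert (~ (v1 = w1 /\ v2 = w2)) by (intros [-> ->]; auto).
  assert (~ (u1 = w1 /\ u2 = w2)) by (intros [-> ->]; auto).
  lia.
Qed.

Definition sq (a b : Z * Z) : R * R :=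
  (IZR (Z.min (fst a - snd a) (fst b - snd b)), IZR (Z.min (fst a + snd a) (fst b + snd b))).

Lemma sq_mem (a b w : Z * Z) : grid_adj a b ->
  (in_square (sq a b) (rotate_pt w) <-> w = a \/ w = b).
Proof.
  intros Hab. destruct a as [a1 a2], b as [b1 b2], w as [w1 w2].
  unfold grid_adj, in_square, sq, rotate_pt in *; simpl in *.
  split.
  - intros [[H1 H2] [H3 H4]].
    rewrite <- plus_IZR in H2, H4.
    apply le_IZR in H1, H2, H3, H4.
    assert ((w1 = a1 /\ w2 = a2) \/ (w1 = b1 /\ w2 = b2))%Z as [[-> ->]|[-> ->]] by lia; auto.
  - intros [E|E]; injection E as -> ->;
    repeat split; first [apply IZR_le; lia | rewrite <- plus_IZR; apply IZR_le; lia].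
Qed.

Lemma rotate_inj (u v : Z * Z) : rotate_pt u = rotate_pt v -> u = v.
Proof.
  destruct u as [u1 u2], v as [v1 v2]; unfold rotate_pt; simpl.
  intros E; injection E as E1 E2. apply eq_IZR in E1, E2.
  f_equal; lia.
Qed.

Definition zz_dec (u v : Z * Z) : {u = v} + {u <> v}.
Proof. decide equality; apply Z.eq_dec. Defined.

Definition trip_flat (T : list ((Z*Z)*(Z*Z)*(Z*Z))) : list (Z*Z) :=
  flat_map (fun t => let '(a, b, c) := t in [a; b; c]) T.
Definition leaves (T : list ((Z*Z)*(Z*Z)*(Z*Z))) : list (Z*Z) :=
  flat_map (fun t => let '(a, b, c) := t in [a; c]) T.
Definition centers (T : list ((Z*Z)*(Z*Z)*(Z*Z))) : list (Z*Z) :=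
  map (fun t => let '(a, b, c) := t in b) T.
Definition pairsL (T : list ((Z*Z)*(Z*Z)*(Z*Z))) : list ((Z*Z)*(Z*Z)) :=
  flat_map (fun t => let '(a, b, c) := t in [(a, b); (c, b)]) T.

Lemma flat_perm T : Permutation (trip_flat T) (leaves T ++ centers T).
Proof.
  induction T as [|[[a b] c] T IH]; simpl; auto.
  constructor. apply Permutation_trans with (b :: c :: (leaves T ++ centers T)).
  - do 2 constructor; exact IH.
  - apply Permutation_trans with (c :: b :: (leaves T ++ centers T)); [constructor|].
    constructor. apply Permutation_middle.
Qed.

Lemma map_fst_pairs T : map fst (pairsL T) = leaves T.
Proof. induction T as [|[[a b] c] T IH]; simpl; auto. rewrite IH; auto. Qed.

Lemma len_flat T : length (trip_flat T) = (3 * length T)%nat.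
Proof. induction T as [|[[a b] c] T IH]; simpl; auto. rewrite IH; lia. Qed.

Lemma len_pairs T : length (pairsL T) = (2 * length T)%nat.
Proof. induction T as [|[[a b] c] T IH]; simpl; auto. rewrite IH; lia. Qed.

Lemma in_pairs T x m : In (x, m) (pairsL T) ->
  exists a b c, In (a, b, c) T /\ ((x = a /\ m = b) \/ (x = c /\ m = b)).
Proof.
  unfold pairsL; rewrite in_flat_map. intros [[[a b] c] [Hin H]].
  exists a, b, c; split; auto. simpl in H.
  destruct H as [E|[E|[]]]; injection E; intros; subst; auto.
Qed.

Lemma nodup_app_disj {A} (l1 l2 : list A) x : NoDup (l1 ++ l2) -> In x l1 -> In x l2 -> False.
Proof.
  induction l1 as [|y l1 IH]; simpl; [tauto|].
  intros H [->|Hx] Hx2; inversion H as [|? ? H2 H3]; subst.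
  - apply H2, in_or_app; auto.
  - eauto.
Qed.

Lemma fst_unique {A B} (l : list (A*B)) x m m' :
  NoDup (map fst l) -> In (x, m) l -> In (x, m') l -> m = m'.
Proof.
  induction l as [|[y n] l IH]; simpl; [tauto|].
  intros H H1 H2; inversion H as [|? ? H3 H4]; subst.
  destruct H1 as [E1|H1], H2 as [E2|H2].
  - injection E1; injection E2; intros; subst; auto.
  - injection E1; intros; subst. exfalso; apply H3. change x with (fst (x, m')). apply in_map; auto.
  - injection E2; intros; subst. exfalso; apply H3. change x with (fst (x, m)). apply in_map; auto.
  - eauto.
Qed.

Lemma forward (V : list (Z * Z)) (HV : NoDup V) :
  P3_partition V ->
  exists S : list (R * R),
    NoDup S /\ (3 * length S = 2 * length V)%nat /\ discriminates S (P_of V).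
Proof.
  intros [T [HT HP]].
  fold (trip_flat T) in HP.
  assert (ND : NoDup (leaves T ++ centers T)).
  { eapply Permutation_NoDup; [| exact HV].
    eapply Permutation_trans; [apply Permutation_sym; exact HP | apply flat_perm]. }
  assert (HpT : forall a b c, In (a, b, c) T -> is_P3 V (a, b, c)).
  { intros a b c H. rewrite Forall_forall in HT. apply HT; auto. }
  assert (Hpair : forall x m, In (x, m) (pairsL T) ->
            grid_adj x m /\ In x (leaves T) /\ In m (centers T)).
  { intros x m H. destruct (in_pairs T x m H) as (a & b & c & Hin & Hc).
    pose proof (HpT a b c Hin) as (_ & _ & _ & N1 & N2 & N3 & A1 & A2).
    assert (Lc : In b (centers T)).
    { unfold centers. change b with ((fun t : (Z*Z)*(Z*Z)*(Z*Z) => let '(_, b, _) := t in b) (a, b, c)).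
      apply in_map; auto. }
    destruct Hc as [[-> ->]|[-> ->]]; repeat split; auto.
    - unfold leaves; apply in_flat_map; exists (a, b, c); simpl; auto.
    - unfold grid_adj in *. lia.
    - unfold leaves; apply in_flat_map; exists (a, b, c); simpl; auto. }
  exists (map (fun p => sq (fst p) (snd p)) (pairsL T)).
  repeat split.
  - apply NoDup_map_NoDup_ForallPairs.
    + intros [x m] [y m'] H1 H2 E; simpl in E.
      destruct (Hpair x m H1) as (A1 & L1 & C1).
      destruct (Hpair y m' H2) as (A2 & L2 & C2).
      assert (Hx : in_square (sq x m) (rotate_pt x)) by (apply sq_mem; auto).
      rewrite E in Hx. apply sq_mem in Hx; auto.
      destruct Hx as [->| ->].
      * f_equal. eapply fst_unique; eauto. rewrite map_fst_pairs.
        eapply NoDup_app_remove_r; eauto.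
      * exfalso; exact (nodup_app_disj _ _ _ ND L1 C2).
    + apply NoDup_map_inv with (f := fst). rewrite map_fst_pairs.
      eapply NoDup_app_remove_r; eauto.
  - rewrite length_map, len_pairs. apply Permutation_length in HP.
    rewrite len_flat in HP. lia.
  - intros p Hp. unfold P_of in Hp. apply in_map_iff in Hp as [w [<- Hw]].
    apply (Permutation_in _ (Permutation_sym HP)) in Hw.
    unfold trip_flat in Hw. apply in_flat_map in Hw as [[[a b] c] [Hin Hw]].
    assert (Pab : In (a, b) (pairsL T)) by (unfold pairsL; apply in_flat_map; exists (a,b,c); simpl; auto).
    assert (Pcb : In (c, b) (pairsL T)) by (unfold pairsL; apply in_flat_map; exists (a,b,c); simpl; auto).
    simpl in Hw. destruct Hw as [->|[->|[->|[]]]].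
    + exists (sq w b); split; [apply in_map_iff; exists (w, b); auto|].
      apply sq_mem; [apply Hpair; auto| auto].
    + exists (sq a w); split; [apply in_map_iff; exists (a, w); auto|].
      apply sq_mem; [apply Hpair; auto| auto].
    + exists (sq w b); split; [apply in_map_iff; exists (w, b); auto|].
      apply sq_mem; [apply Hpair; auto| auto].
  - intros p q Hp Hq Hne.
    unfold P_of in Hp, Hq.
    apply in_map_iff in Hp as [u [<- Hu]]. apply in_map_iff in Hq as [w [<- Hw]].
    assert (Nuw : u <> w) by (intros ->; auto).
    assert (Key : exists x m, In (x, m) (pairsL T) /\
              (((u = x \/ u = m) /\ ~ (w = x \/ w = m)) \/
               (~ (u = x \/ u = m) /\ (w = x \/ w = m)))).
    { apply (Permutation_in _ (Permutation_sym HP)) in Hu.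
      unfold trip_flat in Hu. apply in_flat_map in Hu as [[[a b] c] [Hin Hu]].
      pose proof (HpT a b c Hin) as (_ & _ & _ & N1 & N2 & N3 & _ & _).
      assert (Pab : In (a, b) (pairsL T)) by (unfold pairsL; apply in_flat_map; exists (a,b,c); simpl; auto).
      assert (Pcb : In (c, b) (pairsL T)) by (unfold pairsL; apply in_flat_map; exists (a,b,c); simpl; auto).
      simpl in Hu. destruct Hu as [->|[->|[->|[]]]].
      - destruct (zz_dec w b) as [Eb|Nb].
        + exists c, b; split; auto. right; split; [intros [E|E]; congruence | right; auto].
        + exists u, b; split; auto. left; split; [left; auto | intros [E|E]; congruence].
      - destruct (zz_dec w a) as [Ea|Na].
        + exists c, u; split; auto. left; split; [right; auto | intros [E|E]; congruence].
        + exists a, u; split; auto. left; split; [right; auto | intros [E|E]; congruence].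
      - destruct (zz_dec w b) as [Eb|Nb].
        + exists a, b; split; auto. right; split; [intros [E|E]; congruence | right; auto].
        + exists u, b; split; auto. left; split; [left; auto | intros [E|E]; congruence]. }
    destruct Key as (x & m & Hxm & Hc).
    destruct (Hpair x m Hxm) as (Ad & _ & _).
    exists (sq x m); split; [apply in_map_iff; exists (x, m); auto|].
    rewrite (sq_mem x m u Ad), (sq_mem x m w Ad). tauto.
Qed.

Definition in_square_dec (s p : R * R) : {in_square s p} + {~ in_square s p}.
Proof.
  unfold in_square.
  destruct (Rle_dec (fst s) (fst p)), (Rle_dec (fst p) (fst s + 1)),
    (Rle_dec (snd s) (snd p)), (Rle_dec (snd p) (snd s + 1));
    try (left; tauto); right; tauto.
Defined.

Definition inb (s p : R * R) : bool := if in_square_dec s p then true else false.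

Lemma inb_spec s p : inb s p = true <-> in_square s p.
Proof. unfold inb; destruct (in_square_dec s p); split; intros; auto; discriminate. Qed.

Definition sqs (S : list (R*R)) (v : Z*Z) := filter (fun s => inb s (rotate_pt v)) S.
Definition pts (V : list (Z*Z)) (s : R*R) := filter (fun v => inb s (rotate_pt v)) V.
Definition deg S v := length (sqs S v).
Definition fsq S v := hd (0%R, 0%R) (sqs S v).
Definition other (V : list (Z*Z)) s q :=
  hd (0%Z, 0%Z) (filter (fun u => andb (inb s (rotate_pt u)) (if zz_dec u q then false else true)) V).
Definition triple V S q : (Z*Z)*(Z*Z)*(Z*Z) :=
  match sqs S q with s1 :: s2 :: _ => (other V s1 q, q, other V s2 q) | _ => (q, q, q) end.

Lemma in_sqs S v s : In s (sqs S v) <-> In s S /\ in_square s (rotate_pt v).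
Proof. unfold sqs; rewrite filter_In, inb_spec; tauto. Qed.
Lemma in_pts V v s : In v (pts V s) <-> In v V /\ in_square s (rotate_pt v).
Proof. unfold pts; rewrite filter_In, inb_spec; tauto. Qed.

Lemma hd_in {A} (d : A) l : l <> [] -> In (hd d l) l.
Proof. destruct l; simpl; auto; congruence. Qed.

Lemma backward (V : list (Z * Z)) (HV : NoDup V) (S : list (R * R)) :
  NoDup S -> (3 * length S = 2 * length V)%nat -> discriminates S (P_of V) ->
  P3_partition V.
Proof.
  intros HS Hlen [Dcov Dsep].
  assert (Hrot : forall v, In v V -> In (rotate_pt v) (P_of V)) by (intros; apply in_map; auto).
  assert (Hdeg1 : forall v, In v V -> (1 <= deg S v)%nat).
  { intros v Hv. destruct (Dcov _ (Hrot v Hv)) as [s [Hs Hin]].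
    apply (len_pos _ s). apply in_sqs; auto. }
  assert (Hcnt2 : forall s, In s S -> (length (pts V s) <= 2)%nat).
  { intros s Hs. destruct (Nat.le_gt_cases (length (pts V s)) 2) as [|Hg]; auto.
    destruct (three_of (pts V s)) as (a & b & c & Ha & Hb & Hc & N1 & N2 & N3);
      [apply NoDup_filter; auto | lia |].
    apply in_pts in Ha, Hb, Hc. exfalso; eapply sq_three; [apply Ha|apply Hb|apply Hc|..]; eauto. }
  assert (Hf : forall v, In v V -> deg S v = 1%nat -> forall s, In s (sqs S v) -> fsq S v = s).
  { intros v Hv Hd s Hs. unfold deg in Hd. apply (one_eq (sqs S v)); auto.
    apply hd_in. intros E; rewrite E in Hs; contradiction. }
  assert (HfS : forall v, In v V -> In (fsq S v) (sqs S v)).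
  { intros v Hv. apply hd_in. intros E. specialize (Hdeg1 v Hv). unfold deg in Hdeg1; rewrite E in Hdeg1; simpl in Hdeg1; lia. }
  assert (Hinj : forall u v, In u V -> In v V -> deg S u = 1%nat -> deg S v = 1%nat ->
             fsq S u = fsq S v -> u = v).
  { intros u v Hu Hv Du Dv E. destruct (zz_dec u v) as [|Ne]; auto. exfalso.
    assert (Np : rotate_pt u <> rotate_pt v) by (intros E'; apply Ne, rotate_inj; auto).
    destruct (Dsep _ _ (Hrot u Hu) (Hrot v Hv) Np) as [s [Hs Hx]].
    destruct (in_square_dec s (rotate_pt u)) as [Iu|Iu].
    - assert (In s (sqs S u)) by (apply in_sqs; auto).
      assert (fsq S u = s) by (apply Hf; auto).
      pose proof (HfS v Hv) as Hv'. rewrite <- E, H0 in Hv'. apply in_sqs in Hv'. tauto.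
    - assert (Iv : in_square s (rotate_pt v)) by tauto.
      assert (In s (sqs S v)) by (apply in_sqs; auto).
      assert (fsq S v = s) by (apply Hf; auto).
      pose proof (HfS u Hu) as Hu'. rewrite E, H0 in Hu'. apply in_sqs in Hu'. tauto. }
  set (D1 := filter (fun v => Nat.eqb (deg S v) 1) V).
  assert (HD1 : forall v, In v D1 <-> In v V /\ deg S v = 1%nat).
  { intros v; unfold D1; rewrite filter_In, Nat.eqb_eq; tauto. }
  assert (ND1 : NoDup (map (fsq S) D1)).
  { apply NoDup_map_NoDup_ForallPairs; [|apply NoDup_filter; auto].
    intros u v Hu Hv E. apply HD1 in Hu, Hv. apply Hinj; tauto. }
  assert (Inc1 : incl (map (fsq S) D1) S).
  { intros s Hs. apply in_map_iff in Hs as [v [<- Hv]]. apply HD1 in Hv.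
    apply (in_sqs S v), HfS; tauto. }
  assert (Hn1 : (length D1 <= length S)%nat).
  { rewrite <- (length_map (fsq S)). apply NoDup_incl_length; auto. }
  assert (DC := double_count (fun v s => inb s (rotate_pt v)) V S).
  change (sumf (fun v => deg S v) V = sumf (fun s => length (pts V s)) S) in DC.
  assert (C1 := sumf_le _ _ S Hcnt2). rewrite sumf_const in C1.
  assert (Lw : forall v, In v V -> ((if Nat.eqb (deg S v) 1 then 1 else 2) <= deg S v)%nat).
  { intros v Hv. specialize (Hdeg1 v Hv). destruct (Nat.eqb_spec (deg S v) 1); lia. }
  assert (C2 := sumf_le _ _ V Lw).
  assert (C3 := sumf_12 (fun v => Nat.eqb (deg S v) 1) V). fold D1 in C3.
  cbv beta in C3. change (sumf (fun v => if Nat.eqb (deg S v) 1 then 1 else 2) V <= sumf (fun v => deg S v) V)%nat in C2.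
  assert (En1 : length D1 = length S) by lia.
  assert (Ecnt : forall s, In s S -> length (pts V s) = 2%nat).
  { intros s Hs. apply (sumf_le_eq (fun s => length (pts V s)) (fun _ => 2%nat) S Hcnt2); [rewrite sumf_const; lia | auto]. }
  assert (Edeg : forall v, In v V -> deg S v = 1%nat \/ deg S v = 2%nat).
  { intros v Hv.
    assert (Eq : sumf (fun v => if Nat.eqb (deg S v) 1 then 1 else 2)%nat V = sumf (fun v => deg S v) V) by lia.
    assert (E := sumf_le_eq _ _ V Lw Eq v Hv). cbv beta in E.
    destruct (Nat.eqb_spec (deg S v) 1); lia. }
  assert (Sinc : incl S (map (fsq S) D1)).
  { apply NoDup_length_incl; auto. rewrite length_map; lia. }
  assert (LeafUniq : forall s x y, In s S -> In x V -> In y V -> deg S x = 1%nat -> deg S y = 1%nat ->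
            in_square s (rotate_pt x) -> in_square s (rotate_pt y) -> x = y).
  { intros s x y Hs Hx Hy Dx Dy Ix Iy. apply Hinj; auto.
    rewrite (Hf x Hx Dx s), (Hf y Hy Dy s); auto; apply in_sqs; auto. }
  assert (HasLeaf : forall s, In s S -> exists w, In w V /\ deg S w = 1%nat /\ in_square s (rotate_pt w)).
  { intros s Hs. apply Sinc in Hs. apply in_map_iff in Hs as [w [<- Hw]]. apply HD1 in Hw.
    exists w; split; [tauto|split; [tauto|]]. apply (in_sqs S w), HfS; tauto. }
  assert (OtherSpec : forall s q, In s S -> In q V -> in_square s (rotate_pt q) ->
            In (other V s q) V /\ in_square s (rotate_pt (other V s q)) /\ other V s q <> q).
  { intros s q Hs Hq Iq.
    destruct (two_of (pts V s) q) as [x [Hx Nx]]; [apply NoDup_filter; auto | apply Ecnt; auto | apply in_pts; auto |].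
    apply in_pts in Hx.
    assert (Hh : In (other V s q) (filter (fun u => andb (inb s (rotate_pt u)) (if zz_dec u q then false else true)) V)).
    { apply hd_in. intros E.
      assert (Hx' : In x (filter (fun u => andb (inb s (rotate_pt u)) (if zz_dec u q then false else true)) V)).
      { apply filter_In; split; [tauto|]. apply andb_true_iff; split; [apply inb_spec; tauto|].
        destruct (zz_dec x q); congruence. }
      rewrite E in Hx'; contradiction. }
    apply filter_In in Hh as [Hh1 Hh2]. apply andb_true_iff in Hh2 as [Hh2 Hh3].
    apply inb_spec in Hh2. destruct (zz_dec (other V s q) q); [discriminate|]. auto. }
  assert (OtherUniq : forall s q x, In s S -> In q V -> in_square s (rotate_pt q) ->
            in_square s (rotate_pt x) -> x <> q -> other V s q = x).
  { intros s q x Hs Hq Iq Ix Nx. destruct (OtherSpec s q Hs Hq Iq) as (O1 & O2 & O3).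
    destruct (zz_dec (other V s q) x) as [|Ne]; auto. exfalso.
    apply (sq_three s (other V s q) x q); auto. }
  assert (OtherLeaf : forall s q, In s S -> In q V -> deg S q = 2%nat -> in_square s (rotate_pt q) ->
            deg S (other V s q) = 1%nat).
  { intros s q Hs Hq Dq Iq. destruct (HasLeaf s Hs) as (w & Hw & Dw & Iw).
    rewrite (OtherUniq s q w); auto. intros ->; lia. }
  assert (Shape : forall q, In q V -> deg S q = 2%nat -> exists s1 s2, sqs S q = [s1; s2] /\
            triple V S q = (other V s1 q, q, other V s2 q)).
  { intros q Hq Dq. unfold deg in Dq. unfold triple.
    destruct (sqs S q) as [|s1 [|s2 [|s3 l]]]; simpl in Dq; try lia. exists s1, s2; auto. }
  set (D2 := filter (fun v => Nat.eqb (deg S v) 2) V).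
  assert (HD2 : forall v, In v D2 <-> In v V /\ deg S v = 2%nat).
  { intros v; unfold D2; rewrite filter_In, Nat.eqb_eq; tauto. }
  assert (Hpart : (length D1 + length D2 = length V)%nat).
  { rewrite <- (filter_compl (fun v => Nat.eqb (deg S v) 1) V). f_equal.
    unfold D2. f_equal. apply filter_ext_in. intros v Hv.
    destruct (Edeg v Hv) as [E|E]; rewrite E; reflexivity. }
  exists (map (triple V S) D2). split.
  - apply Forall_forall. intros t Ht. apply in_map_iff in Ht as [q [<- Hq]]. apply HD2 in Hq as [Hq Dq].
    destruct (Shape q Hq Dq) as (s1 & s2 & Eq & ->).
    assert (I1 : In s1 (sqs S q)) by (rewrite Eq; simpl; auto).
    assert (I2 : In s2 (sqs S q)) by (rewrite Eq; simpl; auto).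
    assert (N12 : s1 <> s2).
    { intros E. assert (Hn := NoDup_filter (fun s => inb s (rotate_pt q)) HS).
      fold (sqs S q) in Hn. rewrite Eq, E in Hn. inversion Hn as [|? ? Hnn _]. simpl in Hnn; tauto. }
    apply in_sqs in I1 as [S1 J1]. apply in_sqs in I2 as [S2 J2].
    destruct (OtherSpec s1 q S1 Hq J1) as (A1 & B1 & C1').
    destruct (OtherSpec s2 q S2 Hq J2) as (A2 & B2 & C2').
    assert (L1 := OtherLeaf s1 q S1 Hq Dq J1).
    unfold is_P3. repeat split; auto.
    + intros E. apply N12. rewrite <- (Hf _ A1 L1 s1), (Hf _ A1 L1 s2); [auto| |]; apply in_sqs; auto.
      rewrite E; auto.
    + apply (sq_adj s1); auto.
    + apply (sq_adj s2); auto.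
  - apply Permutation_sym, NoDup_Permutation_bis; auto.
    + fold (trip_flat (map (triple V S) D2)). rewrite len_flat, length_map. lia.
    + intros v Hv. fold (trip_flat (map (triple V S) D2)). unfold trip_flat.
      apply in_flat_map.
      destruct (Edeg v Hv) as [Dv|Dv].
      * assert (Hs := HfS v Hv). apply in_sqs in Hs as [Hs Is].
        destruct (two_of (pts V (fsq S v)) v) as [q [Hq Nq]]; [apply NoDup_filter; auto | apply Ecnt; auto | apply in_pts; auto |].
        apply in_pts in Hq as [Hq Iq].
        assert (Dq : deg S q = 2%nat).
        { destruct (Edeg q Hq) as [Dq|Dq]; auto. exfalso. apply Nq. apply (LeafUniq (fsq S v)); auto. }
        exists (triple V S q). split; [apply in_map; apply HD2; auto|].
        destruct (Shape q Hq Dq) as (s1 & s2 & Eq & ->).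
        assert (Iq' : In (fsq S v) (sqs S q)) by (apply in_sqs; auto).
        rewrite Eq in Iq'. simpl. destruct Iq' as [E|[E|[]]].
        -- left. rewrite E. apply OtherUniq; auto; rewrite <- E; auto.
        -- right; right; left. rewrite E. apply OtherUniq; auto; rewrite <- E; auto.
      * exists (triple V S v). split; [apply in_map; apply HD2; auto|].
        destruct (Shape v Hv Dv) as (s1 & s2 & Eq & ->). simpl; auto.
Qed.


Theorem mainTheorem11 (V : list (Z * Z)) (HV : NoDup V) :
  P3_partition V <->
  exists S : list (R * R),
    NoDup S /\ (3 * length S = 2 * length V)%nat /\ discriminates S (P_of V).
Proof.
  split.
  - apply forward; auto.
  - intros (S & HS & Hl & HD). exact (backward V HV S HS Hl HD).
Qed.
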